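(* Let $P$ be the transition matrix of an irreducible classical Markov chain on a countable state space $\Lambda$, and consider the associated OQRW with $\mathcal H=\mathbb C$, $\mathcal K=\ell^2(\Lambda)$, $B^i_j=\sqrt{P(j,i)}U^i_j$ ($|U^i_j|=1$). Then for every faithful initial probability measure $\rho^{(0)}$ (i.e. $\rho^{(0)}_i>0$ for all $i\in\Lambda$), the QMC $(\rho^{(0)},(\mathcal E^{(n)})_{n\ge0})$ associated with this OQRW is irreducible.
   Context: A stochastic matrix $P$ has nonnegative entries with $\sum_jP(i,j)=1$. $i\to j$ means $P^n(i,j)>0$ for some $n\in\mathbb N$; the chain is irreducible if $i\to j$ and $j\to i$ for all $i,j\in\Lambda$. States of $\mathcal B$ are probability measures $\rho=(\rho_i)$ identified with $\sum_i\rho_i|i\rangle\langle i|$. The OQRW: $\mathcal M(\rho)=\sum_i(\sum_jB^i_j\rho_j\overline{B^i_j})|i\rangle\langle i|$, $\rho^{(n)}=\mathcal M^n(\rho^{(0)})$, $\Lambda(\rho^{(n)})=\{i:\rho^{(n)}_i\ne0\}$, $M^i_j=B^i_j|i\rangle\langle j|$. $\mathcal B$ is the commutative algebra of bounded diagonal operators on $\ell^2(\Lambda)$, $\mathcal A=\bigotimes_{k\in\mathbb Z_+}\mathcal B$. Transition expectations: $\mathcal E^{(n)}(x\otimes y)=\sum_{j\in\Lambda(\rho^{(n)})}\sum_i\frac{\mathrm{Tr}((\rho^{(n)}_j|j\rangle\langle j|)x)}{\rho^{(n)}_j}{M^i_j}^*yM^i_j$. $\bar b(n)$ is the strong limit as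 $k\to\infty$ of $\mathcal E^{(n)}(I\otimes\cdots\otimes\mathcal E^{(n+k)}(I\otimes I))$; $E_{0]}(a_0\otimes\cdots\otimes a_n\otimes I\otimes\cdots)=\mathcal E^{(0)}(a_0\otimes\cdots\otimes\mathcal E^{(n)}(a_n\otimes\bar b(n+1)))$, extended to $\mathcal A$ by limits. The QMC is reducible if there exist a projection $p\in\mathcal B$, $p\ne0,I$, and $n_0$ with $E_{0]}(p_{[n_0}ap_{[n_0})=E_{0]}(a)$ for all $a\in\mathcal A$, where $p_{[n}=I\otimes\cdots\otimes I\otimes p\otimes p\otimes\cdots$ ($p$ from the $n$-th position on); otherwise irreducible. *)

(* Defs.v *)
From Stdlib Require Import Reals Lra Lia Classical ClassicalEpsilon.
Open Scope R_scope.

Definition Cx : Type := (R * R)%type.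
Definition C0 : Cx := (0, 0).
Definition C1 : Cx := (1, 0).
Definition RtoC (r : R) : Cx := (r, 0).
Definition Cre (z : Cx) : R := fst z.
Definition Cim (z : Cx) : R := snd z.
Definition Cadd (z w : Cx) : Cx := (fst z + fst w, snd z + snd w).
Definition Csub (z w : Cx) : Cx := (fst z - fst w, snd z - snd w).
Definition Cmul (z w : Cx) : Cx :=
  (fst z * fst w - snd z * snd w, fst z * snd w + snd z * fst w).
Definition Cconj (z : Cx) : Cx := (fst z, - snd z).
Definition Cscale (r : R) (z : Cx) : Cx := (r * fst z, r * snd z).
Definition Cnorm2 (z : Cx) : R := fst z * fst z + snd z * snd z.

(* Value of a (convergent) series; 0 by convention if it diverges.    *)
Definition lsum (f : nat -> R) : R :=
  match excluded_middle_informative (exists l, infinite_sum f l) with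
  | left H => proj1_sig (constructive_indefinite_description _ H)
  | right _ => 0
  end.

Section OQRW.

(* The countable state space Lambda is {i : nat | L i = true}. *)
Variable L : nat -> bool.

Definition sumL (f : nat -> R) : R := lsum (fun j => if L j then f j else 0).
Definition sumLC (f : nat -> Cx) : Cx :=
  (sumL (fun j => fst (f j)), sumL (fun j => snd (f j))).

Definition stochastic (P : nat -> nat -> R) : Prop :=
  forall i, L i = true ->
    (forall j, L j = true -> 0 <= P i j) /\
    infinite_sum (fun j => if L j then P i j else 0) 1.

Fixpoint Ppow (P : nat -> nat -> R) (n : nat) (i j : nat) : R :=
  match n with
  | O => if Nat.eqb i j then 1 else 0
  | S m => sumL (fun k => Ppow P m i k * P k j)
  end.

Definition leads_to (P : nat -> nat -> R) (i j : nat) : Prop :=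
  exists n : nat, Ppow P n i j > 0.

Definition irreducible_chain (P : nat -> nat -> R) : Prop :=
  forall i j, L i = true -> L j = true -> leads_to P i j /\ leads_to P j i.

Definition faithful_prob (rho : nat -> R) : Prop :=
  (forall i, L i = true -> rho i > 0) /\
  infinite_sum (fun i => if L i then rho i else 0) 1.

(* ---- the algebra B of bounded diagonal operators on l^2(Lambda) ---- *)
(* an element of B is given by its diagonal entries (only entries in   *)
(* Lambda are meaningful).                                             *)
Definition Bel : Type := nat -> Cx.
Definition Bone : Bel := fun _ => C1.
Definition Bzero : Bel := fun _ => C0.
Definition Bmul (x y : Bel) : Bel := fun j => Cmul (x j) (y j).
Definition Beq (x y : Bel) : Prop := forall j, L j = true -> x j = y j.
Definition bounded (x : Bel) : Prop :=
  exists M, forall j, L j = true -> Cnorm2 (x j) <= M.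
Definition is_projection (p : Bel) : Prop :=
  forall j, L j = true -> Cmul (p j) (p j) = p j /\ Cconj (p j) = p j.

Definition l2 (v : nat -> Cx) : Prop :=
  exists s, infinite_sum (fun j => if L j then Cnorm2 (v j) else 0) s.

Definition sconv (D : nat -> Bel) (Dinf : Bel) : Prop :=
  bounded Dinf /\ (forall N, bounded (D N)) /\
  forall v, l2 v ->
    Un_cv (fun N => sumL (fun j => Cnorm2 (Csub (D N j) (Dinf j)) * Cnorm2 (v j))) 0.

(* the strong limit (chosen; Bzero by convention if it does not exist) *)
Definition slim (D : nat -> Bel) : Bel :=
  match excluded_middle_informative (exists Dinf, sconv D Dinf) with
  | left H => proj1_sig (constructive_indefinite_description _ H)
  | right _ => Bzero
  end.

Variable P : nat -> nat -> R.
Variable U : nat -> nat -> Cx.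
Variable rho0 : nat -> R.

Definition Bop (i j : nat) : Cx := Cscale (sqrt (P j i)) (U i j).

Definition Mop (rho : nat -> R) : nat -> R :=
  fun i => sumL (fun j => Cre (Cmul (Cmul (Bop i j) (RtoC (rho j))) (Cconj (Bop i j)))).

Definition rhon (n : nat) : nat -> R := Nat.iter n Mop rho0.

(* Transition expectation E^(n)(x (x) y): diagonal entry at j equals
   [j in Lambda(rho^(n))] * Tr((rho_j |j><j|) x)/rho_j * (sum_i M^i_j^* y M^i_j)_{jj},
   where Tr((rho_j|j><j|)x) = rho_j x_j and
   (M^i_j)^* y M^i_j = conj(B^i_j) y_i B^i_j |j><j|. *)
Definition Etr (n : nat) (x y : Bel) : Bel := fun j =>
  if Req_EM_T (rhon n j) 0 then C0
  else Cmul (Cscale (/ rhon n j) (Cscale (rhon n j) (x j)))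
            (sumLC (fun i => Cmul (Cconj (Bop i j)) (Cmul (y i) (Bop i j)))).

Fixpoint chain (a : nat -> Bel) (m r : nat) (t : Bel) : Bel :=
  match r with
  | O => Etr m (a m) t
  | S r' => Etr m (a m) (chain a (S m) r' t)
  end.

Definition bbar (n : nat) : Bel := slim (fun k => chain (fun _ => Bone) n k Bone).

Definition E0 (a : nat -> Bel) (n : nat) : Bel := chain a 0 n (bbar (S n)).

Definition ext (a : nat -> Bel) (n : nat) : nat -> Bel :=
  fun k => if Nat.leb k n then a k else Bone.

Definition cut (p : Bel) (n0 : nat) (c : nat -> Bel) : nat -> Bel :=
  fun k => if Nat.ltb k n0 then c k else Bmul p (Bmul (c k) p).

(* Reducibility of the QMC (rho^(0), (E^(n))_n): there are a projection
   p <> 0, I in B and n0 such that E_{0]}(p_[n0 a p_[n0) = E_{0]}(a) for all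
   a, where E_{0]}(p_[n0 a p_[n0) is the strong limit of E_{0]} applied to
   the truncations to the first N+1 factors. *)
Definition QMC_reducible : Prop :=
  exists (p : Bel) (n0 : nat),
    is_projection p /\ ~ Beq p Bzero /\ ~ Beq p Bone /\
    forall (n : nat) (a : nat -> Bel),
      (forall k, (k <= n)%nat -> bounded (a k)) ->
      sconv (fun N => E0 (cut p n0 (ext a n)) N) (E0 (ext a n) n).

Definition QMC_irreducible : Prop := ~ QMC_reducible.

End OQRW.

(* Main.v *)
Require Import Defs.
From Stdlib Require Import Reals.
From Stdlib Require Import Lra Lia Classical ClassicalEpsilon FunctionalExtensionality.
Import Defs.
Open Scope R_scope.

Lemma lsum_eq f l : infinite_sum f l -> lsum f = l.
Proof.
  intro H. unfold lsum. destruct excluded_middle_informative as [e|n].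
  - destruct (constructive_indefinite_description _ e) as [l' Hl']; simpl.
    exact (uniqueness_sum _ _ _ Hl' H).
  - exfalso; apply n; eauto.
Qed.

Lemma sum_single g j : (forall i, i <> j -> g i = 0) ->
  forall N, sum_f_R0 g N = if Nat.ltb N j then 0 else g j.
Proof.
  intros Hg N; induction N as [|N IH].
  - simpl. destruct (Nat.ltb_spec 0 j).
    + apply Hg; lia.
    + assert (j = 0%nat) by lia; subst; reflexivity.
  - simpl sum_f_R0. rewrite IH.
    destruct (Nat.ltb_spec N j); destruct (Nat.ltb_spec (S N) j).
    + rewrite (Hg (S N)) by lia; ring.
    + assert (j = S N) by lia; subst; ring.
    + lia.
    + rewrite (Hg (S N)) by lia; ring.
Qed.

Lemma inf_single g j : (forall i, i <> j -> g i = 0) -> infinite_sum g (g j).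
Proof.
  intros Hg eps He. exists j. intros n Hn. rewrite (sum_single g j Hg).
  destruct (Nat.ltb_spec n j); [lia|]. unfold Rdist. rewrite Rminus_diag, Rabs_R0. lra.
Qed.

Lemma lsum_single g j : (forall i, i <> j -> g i = 0) -> lsum g = g j.
Proof. intro H; apply lsum_eq, inf_single, H. Qed.

Lemma lsum_zero : lsum (fun _ => 0) = 0.
Proof.
  rewrite (lsum_single _ 0) by reflexivity. reflexivity.
Qed.

Lemma sumL_single L f j : L j = true -> (forall i, L i = true -> i <> j -> f i = 0) ->
  sumL L f = f j.
Proof.
  intros Hj H. unfold sumL. rewrite (lsum_single _ j).
  - rewrite Hj; reflexivity.
  - intros i Hi. destruct (L i) eqn:E; auto.
Qed.

Lemma sumL_ext L f g : (forall j, L j = true -> f j = g j) -> sumL L f = sumL L g.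
Proof.
  intro H. unfold sumL. f_equal. apply functional_extensionality; intro j.
  destruct (L j) eqn:E; auto.
Qed.

Lemma sumL_zero L f : (forall j, L j = true -> f j = 0) -> sumL L f = 0.
Proof.
  intro H. unfold sumL. transitivity (lsum (fun _ => 0)); [|apply lsum_zero].
  replace (fun j => if L j then f j else 0) with (fun _ : nat => 0); [reflexivity|].
  apply functional_extensionality; intro j.
  destruct (L j) eqn:E; auto. rewrite H; auto.
Qed.

Lemma sumLC_ext L f g : (forall j, L j = true -> f j = g j) -> sumLC L f = sumLC L g.
Proof.
  intro H. unfold sumLC. f_equal; apply sumL_ext; intros j Hj; rewrite H; auto.
Qed.

Lemma sumLC_single L f j : L j = true -> (forall i, L i = true -> i <> j -> f i = C0) ->
  sumLC L f = f j.
Proof.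
  intros Hj H. unfold sumLC. rewrite (sumL_single L _ j Hj), (sumL_single L (fun j0 => snd (f j0)) j Hj).
  - destruct (f j); reflexivity.
  - intros i Hi Hne; rewrite H; auto.
  - intros i Hi Hne; rewrite H; auto.
Qed.

Lemma partial_le f l : (forall n, 0 <= f n) -> infinite_sum f l -> forall N, sum_f_R0 f N <= l.
Proof.
  intros Hf Hl N. apply (growing_ineq (sum_f_R0 f)); auto.
  intro n; simpl. specialize (Hf (S n)); lra.
Qed.

Lemma term_le f : (forall n, 0 <= f n) -> forall n, f n <= sum_f_R0 f n.
Proof.
  intros Hf n; destruct n; simpl; [lra|].
  pose proof (cond_pos_sum f n Hf). lra.
Qed.

Lemma inf_plus a b la lb : infinite_sum a la -> infinite_sum b lb ->
  infinite_sum (fun j => a j + b j) (la + lb).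
Proof.
  intros Ha Hb. pose proof (CV_plus _ _ _ _ Ha Hb) as H.
  intros eps He. destruct (H eps He) as [N HN]. exists N. intros n Hn.
  rewrite sum_plus. apply HN; auto.
Qed.

Lemma inf_finsum (h : nat -> nat -> R) (l : nat -> R) :
  (forall i, infinite_sum (h i) (l i)) ->
  forall N, infinite_sum (fun j => sum_f_R0 (fun i => h i j) N) (sum_f_R0 l N).
Proof.
  intros H N; induction N as [|N IH]; simpl.
  - apply H.
  - apply inf_plus; auto.
Qed.

Lemma inf_le a b la lb : (forall n, a n <= b n) -> infinite_sum a la -> infinite_sum b lb -> la <= lb.
Proof.
  intros H Ha Hb. apply (@Rle_cv_lim (sum_f_R0 a) (sum_f_R0 b)); auto.
  intro n; apply sum_Rle; auto.
Qed.

Lemma inf_zero : infinite_sum (fun _ => 0) 0.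
Proof. apply (inf_single (fun _ => 0) 0); auto. Qed.

Lemma nonneg_bounded_cv f B : (forall n, 0 <= f n) -> (forall N, sum_f_R0 f N <= B) ->
  exists l, infinite_sum f l.
Proof.
  intros Hf HB. destruct (growing_cv (sum_f_R0 f)) as [l Hl].
  - intro n; simpl. specialize (Hf (S n)); lra.
  - exists B. intros x [i ->]. apply HB.
  - exists l; exact Hl.
Qed.

Lemma comp_cv a b lb : (forall n, 0 <= a n <= b n) -> infinite_sum b lb -> exists l, infinite_sum a l.
Proof.
  intros H Hb. destruct (Rseries_CV_comp a b H) as [l Hl].
  - exists lb; exact Hb.
  - exists l; exact Hl.
Qed.

Lemma Cmul0l z : Cmul C0 z = C0.
Proof. destruct z; unfold Cmul, C0; simpl; f_equal; ring. Qed.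
Lemma Cmul0r z : Cmul z C0 = C0.
Proof. destruct z; unfold Cmul, C0; simpl; f_equal; ring. Qed.
Lemma Cmul1l z : Cmul C1 z = z.
Proof. destruct z; unfold Cmul, C1; simpl; f_equal; ring. Qed.
Lemma Cscale0 r : Cscale r C0 = C0.
Proof. unfold Cscale, C0; simpl; f_equal; ring. Qed.

Lemma Bop_term P U i j w : 0 <= P j i -> Cnorm2 (U i j) = 1 ->
  Cmul (Cconj (Bop P U i j)) (Cmul w (Bop P U i j)) = Cscale (P j i) w.
Proof.
  intros HP HU. unfold Bop, Cnorm2 in *. destruct (U i j) as [u1 u2], w as [w1 w2].
  unfold Cmul, Cconj, Cscale; simpl in *. pose proof (sqrt_sqrt _ HP) as Hs.
  set (s := sqrt (P j i)) in *.
  replace (P j i) with (s*s*(u1*u1+u2*u2)) by (rewrite HU, Hs; ring).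
  f_equal; ring.
Qed.

Lemma Bop_re P U i j r : 0 <= P j i -> Cnorm2 (U i j) = 1 ->
  Cre (Cmul (Cmul (Bop P U i j) (RtoC r)) (Cconj (Bop P U i j))) = P j i * r.
Proof.
  intros HP HU. unfold Bop, Cnorm2 in *. destruct (U i j) as [u1 u2].
  unfold Cmul, Cconj, Cscale, Cre, RtoC; simpl in *. pose proof (sqrt_sqrt _ HP) as Hs.
  set (s := sqrt (P j i)) in *.
  replace (P j i) with (s*s*(u1*u1+u2*u2)) by (rewrite HU, Hs; ring).
  ring.
Qed.

Lemma Etr_val L P U rho0 n x y j : rhon L P U rho0 n j <> 0 ->
  Etr L P U rho0 n x y j =
  Cmul (x j) (sumLC L (fun i => Cmul (Cconj (Bop P U i j)) (Cmul (y i) (Bop P U i j)))).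
Proof.
  intro H. unfold Etr. destruct Req_EM_T; [contradiction|].
  f_equal. destruct (x j) as [a b]; unfold Cscale; simpl. f_equal; field; auto.
Qed.

Lemma Etr_zero_x L P U rho0 n x y j : x j = C0 -> Etr L P U rho0 n x y j = C0.
Proof.
  intro H. unfold Etr. destruct Req_EM_T; auto. rewrite H, !Cscale0, Cmul0l; auto.
Qed.

Lemma Etr_zero_y L P U rho0 n x y j : (forall i, L i = true -> y i = C0) -> Etr L P U rho0 n x y j = C0.
Proof.
  intro H. unfold Etr. destruct Req_EM_T; auto.
  replace (sumLC L _) with C0; [apply Cmul0r|].
  unfold sumLC, C0. f_equal; symmetry; apply sumL_zero; intros i Hi; rewrite H, Cmul0l, Cmul0r; auto.
Qed.

Lemma chain_zero L P U rho0 c k t : (forall i, c k i = C0) ->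
  forall r m, (m <= k <= m + r)%nat -> forall i, chain L P U rho0 c m r t i = C0.
Proof.
  intros Hc r; induction r as [|r IH]; intros m Hm i; simpl.
  - assert (k = m) by lia; subst. apply Etr_zero_x; auto.
  - destruct (Nat.eq_dec k m).
    + subst. apply Etr_zero_x; auto.
    + apply Etr_zero_y. intros i' _. apply IH. lia.
Qed.

Definition good (L : nat -> bool) (r : nat -> R) : Prop :=
  (forall i, L i = true -> r i > 0) /\ exists s, infinite_sum (fun i => if L i then r i else 0) s.

Lemma P_le1 L P (HP : stochastic L P) j i : L j = true -> L i = true -> 0 <= P j i <= 1.
Proof.
  intros Hj Hi. destruct (HP j Hj) as [Hn Hs].
  assert (Hnn : forall k, 0 <= (fun k => if L k then P j k else 0) k).
  { intro k; simpl; destruct (L k) eqn:E; [apply Hn; auto| lra]. }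
  pose proof (term_le _ Hnn i) as H1. pose proof (partial_le _ _ Hnn Hs i) as H2.
  simpl in H1; rewrite Hi in H1. split; [apply Hn; auto| lra].
Qed.

Lemma sum_zero N : sum_f_R0 (fun _ => 0) N = 0.
Proof. induction N; simpl; [reflexivity| rewrite IHN; ring]. Qed.

Lemma exists_pred L P (HP : stochastic L P) (Hirr : irreducible_chain L P) k l :
  L k = true -> L l = true -> k <> l ->
  forall i, L i = true -> exists j, L j = true /\ P j i > 0.
Proof.
  intros Hk Hl Hkl i Hi.
  assert (Hj : exists j, L j = true /\ j <> i).
  { destruct (Nat.eq_dec k i); [exists l | exists k]; split; auto; congruence. }
  destruct Hj as [j [Hj Hji]].
  destruct (Hirr j i Hj Hi) as [[n Hn] _].
  destruct n as [|n].
  - simpl in Hn. apply Nat.eqb_neq in Hji. rewrite Hji in Hn. lra.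
  - apply NNPP; intro Hno. simpl in Hn. rewrite sumL_zero in Hn; [lra|].
    intros m Hm. assert (P m i = 0).
    { destruct (HP m Hm) as [Hn' _]. specialize (Hn' i Hi).
      destruct (Rle_lt_or_eq_dec _ _ Hn'); [|auto]. exfalso; apply Hno; eauto. }
    rewrite H; ring.
Qed.

Lemma Mop_inf L P U r (HP : stochastic L P)
  (HU : forall i j, L i = true -> L j = true -> Cnorm2 (U i j) = 1) :
  good L r -> forall i, L i = true ->
  infinite_sum (fun j => if L j then P j i * r j else 0) (Mop L P U r i).
Proof.
  intros [Hpos [s Hs]] i Hi.
  destruct (comp_cv (fun j => if L j then P j i * r j else 0) (fun i => if L i then r i else 0) s) as [l Hl]; auto.
  - intro n. destruct (L n) eqn:E; [|lra].
    pose proof (P_le1 L P HP n i E Hi). specialize (Hpos n E). split; nra.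
  - replace (Mop L P U r i) with l; auto.
    unfold Mop, sumL. symmetry. rewrite <- (lsum_eq _ _ Hl). f_equal.
    apply functional_extensionality; intro j. destruct (L j) eqn:E; auto.
    apply Bop_re; [apply (P_le1 L P HP j i E Hi)| apply HU; auto].
Qed.

Lemma Mop_good L P U r (HP : stochastic L P) (Hirr : irreducible_chain L P)
  (HU : forall i j, L i = true -> L j = true -> Cnorm2 (U i j) = 1) k l :
  L k = true -> L l = true -> k <> l ->
  good L r -> good L (Mop L P U r).
Proof.
  intros Hk Hl Hkl Hg. pose proof (Mop_inf L P U r HP HU Hg) as Hinf.
  destruct Hg as [Hpos [s Hs]].
  assert (Hpos' : forall i, L i = true -> Mop L P U r i > 0).
  { intros i Hi. destruct (exists_pred L P HP Hirr k l Hk Hl Hkl i Hi) as [j [Hj Hji]].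
    assert (Hnn : forall n, 0 <= (fun j => if L j then P j i * r j else 0) n).
    { intro n; simpl. destruct (L n) eqn:E; [|lra].
      pose proof (P_le1 L P HP n i E Hi). specialize (Hpos n E). nra. }
    pose proof (term_le _ Hnn j) as H1. pose proof (partial_le _ _ Hnn (Hinf i Hi) j) as H2.
    simpl in H1. rewrite Hj in H1. specialize (Hpos j Hj). nra. }
  split; auto.
  apply (nonneg_bounded_cv _ s).
  - intro n; destruct (L n) eqn:E; [left; apply Hpos'; auto| lra].
  - intro N.
    set (h := fun i j => if L i then (if L j then P j i * r j else 0) else 0).
    assert (Hh : forall i, infinite_sum (h i) (if L i then Mop L P U r i else 0)).
    { intro i. unfold h. destruct (L i) eqn:E; [apply Hinf; auto| apply inf_zero]. }
    pose proof (inf_finsum h _ Hh N) as HF.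
    refine (inf_le _ _ _ _ _ HF Hs). intro j.
    simpl. unfold h. destruct (L j) eqn:E.
    + destruct (HP j E) as [Hn1 Hs1].
      assert (Hnn : forall k, 0 <= (fun k => if L k then P j k else 0) k).
      { intro m; simpl; destruct (L m) eqn:E'; [apply Hn1; auto| lra]. }
      pose proof (partial_le _ _ Hnn Hs1 N) as H2.
      rewrite (sum_eq _ (fun i => (if L i then P j i else 0) * r j)).
      * rewrite <- scal_sum. specialize (Hpos j E).
        pose proof (cond_pos_sum _ N Hnn). nra.
      * intros i _. destruct (L i); ring.
    + rewrite (sum_eq _ (fun _ => 0)); [rewrite sum_zero; lra|].
      intros i _. destruct (L i); auto.
Qed.

Lemma rhon_good L P U rho0 (HP : stochastic L P) (Hirr : irreducible_chain L P)
  (HU : forall i j, L i = true -> L j = true -> Cnorm2 (U i j) = 1) k l :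
  L k = true -> L l = true -> k <> l -> faithful_prob L rho0 ->
  forall n, good L (rhon L P U rho0 n).
Proof.
  intros Hk Hl Hkl [H1 H2] n. induction n as [|n IH].
  - split; [exact H1| eauto].
  - change (rhon L P U rho0 (S n)) with (Mop L P U (rhon L P U rho0 n)).
    exact (Mop_good L P U _ HP Hirr HU k l Hk Hl Hkl IH).
Qed.

Definition ev (y : nat) : Bel := fun i => if Nat.eqb i y then C1 else C0.

Lemma Cnorm2_C0 : Cnorm2 C0 = 0.
Proof. unfold Cnorm2, C0; simpl; ring. Qed.
Lemma Cnorm2_C1 : Cnorm2 C1 = 1.
Proof. unfold Cnorm2, C1; simpl; ring. Qed.
Lemma Cscale1 z : Cscale 1 z = z.
Proof. destruct z; unfold Cscale; simpl; f_equal; ring. Qed.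
Lemma Cscale_comp a b z : Cscale a (Cscale b z) = Cscale (a*b) z.
Proof. destruct z; unfold Cscale; simpl; f_equal; ring. Qed.

Lemma sconv_uniq L D Dinf j K c : sconv L D Dinf -> L j = true ->
  (forall N, (N >= K)%nat -> D N j = c) -> Dinf j = c.
Proof.
  intros [_ [_ Hv]] Hj HD.
  set (v := ev j).
  assert (Hvj : forall i, i <> j -> v i = C0).
  { intros i Hi. unfold v, ev. apply Nat.eqb_neq in Hi. rewrite Hi; auto. }
  assert (Hl2 : l2 L v).
  { exists ((fun i => if L i then Cnorm2 (v i) else 0) j). apply (inf_single (fun i => if L i then Cnorm2 (v i) else 0) j).
    intros i Hi. rewrite Hvj by auto. rewrite Cnorm2_C0. destruct (L i); auto. }
  specialize (Hv v Hl2).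
  set (q := Cnorm2 (Csub c (Dinf j))).
  assert (Hq : forall N, (N >= K)%nat ->
     sumL L (fun j0 => Cnorm2 (Csub (D N j0) (Dinf j0)) * Cnorm2 (v j0)) = q).
  { intros N HN. rewrite (sumL_single L _ j Hj).
    - rewrite HD by auto. unfold v, ev. rewrite Nat.eqb_refl, Cnorm2_C1. unfold q; ring.
    - intros i _ Hi. rewrite Hvj, Cnorm2_C0 by auto. ring. }
  assert (Hq0 : 0 <= q) by (unfold q, Cnorm2; nra).
  assert (q = 0).
  { destruct (Rle_lt_or_eq_dec _ _ Hq0) as [Hlt|]; [|auto].
    destruct (Hv q Hlt) as [N HN]. specialize (HN (max N K) (Nat.le_max_l _ _)).
    rewrite (Hq (max N K)) in HN by apply Nat.le_max_r. unfold Rdist in HN. rewrite Rminus_0_r, Rabs_right in HN by lra. lra. }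
  unfold q, Cnorm2, Csub in H. destruct c as [c1 c2]; destruct (Dinf j) as [d1 d2]; simpl in H.
  assert (H1 : (c1 - d1) * (c1 - d1) = 0) by (pose proof (Rle_0_sqr (c1-d1)); pose proof (Rle_0_sqr (c2-d2)); unfold Rsqr in *; lra).
  assert (H2 : (c2 - d2) * (c2 - d2) = 0) by (pose proof (Rle_0_sqr (c1-d1)); pose proof (Rle_0_sqr (c2-d2)); unfold Rsqr in *; lra).
  apply Rmult_integral in H1. apply Rmult_integral in H2.
  f_equal; lra.
Qed.

Lemma sumLC_P L P U (HP : stochastic L P)
  (HU : forall i j, L i = true -> L j = true -> Cnorm2 (U i j) = 1) i y :
  L i = true -> (forall j, L j = true -> y j = C1) ->
  sumLC L (fun j => Cmul (Cconj (Bop P U j i)) (Cmul (y j) (Bop P U j i))) = C1.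
Proof.
  intros Hi Hy. destruct (HP i Hi) as [Hn Hs].
  rewrite (sumLC_ext L _ (fun j => Cscale (P i j) C1)).
  - unfold sumLC, Cscale, C1; simpl. f_equal.
    + rewrite (sumL_ext L _ (P i)) by (intros; ring). unfold sumL. apply lsum_eq; auto.
    + apply sumL_zero; intros; ring.
  - intros j Hj. rewrite Hy by auto. apply Bop_term; [apply Hn; auto| apply HU; auto].
Qed.

Lemma chain_ones L P U rho0 (HP : stochastic L P)
  (HU : forall i j, L i = true -> L j = true -> Cnorm2 (U i j) = 1)
  (Hr : forall n i, L i = true -> rhon L P U rho0 n i > 0) :
  forall k m i, L i = true -> chain L P U rho0 (fun _ => Bone) m k Bone i = C1.
Proof.
  intro k; induction k as [|k IH]; intros m i Hi; simpl;
  rewrite Etr_val by (specialize (Hr m i Hi); lra); unfold Bone at 1; rewrite Cmul1l;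
  apply sumLC_P; auto.
Qed.

Lemma bbar_one L P U rho0 (HP : stochastic L P)
  (HU : forall i j, L i = true -> L j = true -> Cnorm2 (U i j) = 1)
  (Hr : forall n i, L i = true -> rhon L P U rho0 n i > 0) :
  forall n i, L i = true -> bbar L P U rho0 n i = C1.
Proof.
  intros n i Hi. unfold bbar, slim.
  destruct excluded_middle_informative as [e|ne].
  - destruct (constructive_indefinite_description _ e) as [D' HD']; simpl.
    apply (sconv_uniq L _ D' i 0 C1 HD' Hi). intros; apply chain_ones; auto.
  - exfalso; apply ne. exists Bone. split; [|split].
    + exists 1. intros; unfold Bone; rewrite Cnorm2_C1; lra.
    + intro N. exists 1. intros j Hj. rewrite chain_ones by auto. rewrite Cnorm2_C1; lra.
    + intros v _.
      replace (fun N => sumL L (fun j => Cnorm2 (Csub (chain L P U rho0 (fun _ => Bone) n N Bone j) (Bone j)) * Cnorm2 (v j)))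
        with (fun _ : nat => 0).
      * intros eps He. exists 0%nat. intros. unfold Rdist. rewrite Rminus_diag, Rabs_R0; lra.
      * apply functional_extensionality; intro N. symmetry. apply sumL_zero. intros j Hj.
        rewrite chain_ones by auto. unfold Bone, Csub, Cnorm2, C1; simpl. ring.
Qed.

Definition reach (L : nat -> bool) (P : nat -> nat -> R) (n j l : nat) : Prop :=
  exists x : nat -> nat, x 0%nat = j /\ x n = l /\
    forall m, (m < n)%nat -> L (x (S m)) = true /\ P (x m) (x (S m)) > 0.

Lemma Ppow_reach L P (HP : stochastic L P) :
  forall n j l, L l = true -> Ppow L P n j l <> 0 -> reach L P n j l.
Proof.
  intro n; induction n as [|n IH]; intros j l Hl H.
  - simpl in H. destruct (Nat.eqb_spec j l); [|lra]. subst.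
    exists (fun _ => l). repeat split; auto; intros; lia.
  - simpl in H.
    assert (Hex : exists k, L k = true /\ Ppow L P n j k * P k l <> 0).
    { apply NNPP; intro Hno. apply H. apply sumL_zero. intros k Hk.
      apply NNPP; intro Hne. apply Hno; eauto. }
    destruct Hex as [k [Hk Hkl]].
    assert (H1 : Ppow L P n j k <> 0) by (intro E; apply Hkl; rewrite E; ring).
    assert (H2 : P k l > 0).
    { destruct (HP k Hk) as [Hn _]. specialize (Hn l Hl).
      destruct (Rle_lt_or_eq_dec _ _ Hn); auto. exfalso; apply Hkl; rewrite <- e; ring. }
    destruct (IH j k Hk H1) as [x [Hx0 [Hxn Hx]]].
    exists (fun m => if Nat.leb m n then x m else l). split; [|split].
    + simpl. auto.
    + destruct (Nat.leb_spec (S n) n); [lia| auto].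
    + intros m Hm. destruct (Nat.leb_spec m n); [|lia].
      destruct (Nat.leb_spec (S m) n).
      * apply Hx. lia.
      * assert (m = n) by lia. subst m. rewrite Hxn. auto.
Qed.

Lemma reach_app L P a b j k l : reach L P a j k -> reach L P b k l -> reach L P (a + b) j l.
Proof.
  intros [x [Hx0 [Hxa Hx]]] [y [Hy0 [Hyb Hy]]].
  set (z := fun m => if Nat.leb m a then x m else y (m - a)%nat).
  assert (Hz : forall m, (m >= a)%nat -> z m = y (m - a)%nat).
  { intros m Hm. unfold z. destruct (Nat.leb_spec m a); auto.
    assert (m = a) by lia. subst m. rewrite Nat.sub_diag, Hxa, Hy0; auto. }
  exists z. split; [|split].
  - unfold z; simpl; auto.
  - rewrite Hz by lia. replace (a + b - a)%nat with b by lia. auto.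
  - intros m Hm. destruct (Nat.leb_spec (S m) a).
    + unfold z. destruct (Nat.leb_spec (S m) a); [|lia]. destruct (Nat.leb_spec m a); [|lia].
      apply Hx; lia.
    + rewrite !Hz by lia. replace (S m - a)%nat with (S (m - a)) by lia. apply Hy; lia.
Qed.

Lemma reach_pow L P c l : reach L P c l l -> forall t, reach L P (t * c) l l.
Proof.
  intros H t; induction t as [|t IH].
  - exists (fun _ => l). repeat split; auto; intros; simpl in *; lia.
  - change (S t * c)%nat with (c + t * c)%nat. eapply reach_app; eauto.
Qed.

Lemma chain_path L P U rho0 (HP : stochastic L P)
  (HU : forall i j, L i = true -> L j = true -> Cnorm2 (U i j) = 1)
  (Hr : forall n i, L i = true -> rhon L P U rho0 n i > 0)
  (x : nat -> nat) n A t :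
  (forall m, (m <= n)%nat -> L (x m) = true) ->
  (forall m, (m < n)%nat -> P (x m) (x (S m)) > 0) ->
  (forall m, (m <= n)%nat -> A m = ev (x m)) ->
  forall r m, (m + r = n)%nat -> exists w, w > 0 /\
    chain L P U rho0 A m r t (x m) =
      Cscale w (sumLC L (fun i => Cmul (Cconj (Bop P U i (x n))) (Cmul (t i) (Bop P U i (x n))))) /\
    forall i, i <> x m -> chain L P U rho0 A m r t i = C0.
Proof.
  intros HL HPx HA r. induction r as [|r IH]; intros m Hm; simpl.
  - assert (m = n) by lia. subst m. exists 1. split; [lra|split].
    + rewrite Etr_val by (specialize (Hr n (x n) (HL n (le_n n))); lra).
      rewrite HA by lia. unfold ev. rewrite Nat.eqb_refl, Cmul1l, Cscale1. auto.
    + intros i Hi. apply Etr_zero_x. rewrite HA by lia. unfold ev.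
      apply Nat.eqb_neq in Hi. rewrite Hi; auto.
  - destruct (IH (S m)) as [w [Hw [Hv Hz]]]; [lia|].
    assert (HLm : L (x m) = true) by (apply HL; lia).
    assert (HLS : L (x (S m)) = true) by (apply HL; lia).
    assert (HPm : P (x m) (x (S m)) > 0) by (apply HPx; lia).
    exists (P (x m) (x (S m)) * w). split; [nra|split].
    + rewrite Etr_val by (specialize (Hr m (x m) HLm); lra).
      rewrite HA by lia. unfold ev at 1. rewrite Nat.eqb_refl, Cmul1l.
      rewrite (sumLC_single L _ (x (S m)) HLS).
      * rewrite Hv. rewrite Bop_term by (try lra; apply HU; auto). apply Cscale_comp.
      * intros i _ Hi. rewrite Hz by auto. rewrite Cmul0l, Cmul0r; auto.
    + intros i Hi. apply Etr_zero_x. rewrite HA by lia. unfold ev.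
      apply Nat.eqb_neq in Hi. rewrite Hi; auto.
Qed.

Theorem mainTheorem14 (L : nat -> bool) (P : nat -> nat -> R) (U : nat -> nat -> Cx)
  (rho0 : nat -> R)
  (HP : stochastic L P) (Hirr : irreducible_chain L P)
  (HU : forall i j, L i = true -> L j = true -> Cnorm2 (U i j) = 1)
  (Hrho : faithful_prob L rho0) :
  QMC_irreducible L P U rho0.
Proof.
  intros [p [n0 [Hproj [Hnz [Hno Hsc]]]]].
  assert (Hl : exists l, L l = true /\ p l <> C1).
  { apply NNPP; intro H. apply Hno. intros j Hj. apply NNPP; intro H'. apply H; eauto. }
  destruct Hl as [l [Hl Hpl]].
  assert (Hpl0 : p l = C0).
  { destruct (Hproj l Hl) as [Hm Hc]. destruct (p l) as [a b].
    unfold Cconj in Hc; simpl in Hc. injection Hc as Hb.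
    assert (b = 0) by lra. subst b.
    unfold Cmul in Hm; simpl in Hm. injection Hm as Ha _.
    assert (Ha' : a * (a - 1) = 0) by lra. apply Rmult_integral in Ha'.
    destruct Ha' as [-> | Ha']; [reflexivity|].
    exfalso; apply Hpl. unfold C1. f_equal. lra. }
  assert (Hk : exists k, L k = true /\ p k <> C0).
  { apply NNPP; intro H. apply Hnz. intros j Hj. apply NNPP; intro H'. apply H; eauto. }
  destruct Hk as [k [Hk Hpk]].
  assert (Hkl : k <> l) by (intro E; subst; auto).
  assert (Hr : forall n i, L i = true -> rhon L P U rho0 n i > 0).
  { intros n i Hi. exact (proj1 (rhon_good L P U rho0 HP Hirr HU k l Hk Hl Hkl Hrho n) i Hi). }
  destruct (Hirr l k Hl Hk) as [[n1 Hn1] [n2 Hn2]].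
  pose proof (Ppow_reach L P HP n1 l k Hk ltac:(lra)) as R1.
  pose proof (Ppow_reach L P HP n2 k l Hl ltac:(lra)) as R2.
  assert (Hn1pos : (n1 >= 1)%nat).
  { destruct n1; [|lia]. destruct R1 as [x [Hx0 [Hx1 _]]]. congruence. }
  pose proof (reach_pow L P _ l (reach_app L P _ _ _ _ _ R1 R2) n0) as R.
  set (n := (n0 * (n1 + n2))%nat) in R.
  assert (Hnn0 : (n >= n0)%nat) by (unfold n; nia).
  destruct R as [x [Hx0 [Hxn Hx]]].
  assert (HLx : forall m, (m <= n)%nat -> L (x m) = true).
  { intros m Hm. destruct m; [rewrite Hx0; auto| apply Hx; lia]. }
  set (a := fun m => ev (x m)).
  assert (Hb : forall k0, (k0 <= n)%nat -> bounded L (a k0)).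
  { intros k0 _. exists 1. intros j _. unfold a, ev. destruct (Nat.eqb j (x k0)).
    - rewrite Cnorm2_C1; lra.
    - rewrite Cnorm2_C0; lra. }
  specialize (Hsc n a Hb).
  assert (HZ : E0 L P U rho0 (ext a n) n l = C0).
  { apply (sconv_uniq L _ _ l n C0 Hsc Hl). intros N HN. unfold E0.
    apply (chain_zero L P U rho0 _ n); [|lia].
    intro i. unfold cut, ext, Bmul.
    destruct (Nat.ltb_spec n n0); [lia|]. rewrite Nat.leb_refl. unfold a, ev. rewrite Hxn.
    destruct (Nat.eqb_spec i l).
    - subst i. rewrite Hpl0. apply Cmul0l.
    - rewrite Cmul0l, Cmul0r; auto. }
  unfold E0 in HZ.
  destruct (chain_path L P U rho0 HP HU Hr x n (ext a n) (bbar L P U rho0 (S n)) HLx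
     (fun m Hm => proj2 (Hx m Hm))
     (fun m Hm => ltac:(unfold ext; destruct (Nat.leb_spec m n); [reflexivity| lia]))
     n 0 (Nat.add_0_l n)) as [w [Hw [Hv _]]].
  rewrite Hx0 in Hv. rewrite Hv in HZ.
  rewrite sumLC_P in HZ; auto.
  - unfold Cscale, C1, C0 in HZ; simpl in HZ. injection HZ as HZ1 _. lra.
  - intros j Hj. apply bbar_one; auto.
Qed.
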